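(* Let $p$ be an odd prime, $h(t)\in\Lambda_p$ irreducible with $\mathrm{br}\,h=n\ge1$, and $\mathbb X=(\mathbb F(p,h(t)),* )$. For $m\ge1$ let $p_m(t)=\sum_{j=0}^{m-1}t^j$ and $H_m(t)=1-t^m$. Then: (1) $\mathbb X$ is trivial (i.e. $a*b=a$ for all $a,b$) if and only if $h(t)\doteq t-1$. (2) If $\mathbb X$ is non-trivial, then $*^m=*^0$ (i.e. $t_{\mathbb X}$ divides $m$) if and only if $h(t)$ divides $p_m(t)$ in $\Lambda_p$. (3) $H_m(\bar t)=0$ in $\mathbb F(p,h(t))$ if and only if $m$ is a multiple of $t_{\mathbb X}$. (4) If $\mathbb X$ is non-trivial then $t_{\mathbb X}\ge n+1$; moreover $t_{\mathbb X}=n+1$ if and only if $p_{n+1}(t)$ is irreducible in $\mathbb Z_p[t]$ and $h(t)\doteq p_{n+1}(t)$ in $\Lambda_p$, in which case $p_{n+1}(t)$ is irreducible in $\mathbb Z[t]$ and $n+1$ is prime.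
   Context: A quandle is a set with operation $*$ satisfying $a*a=a$, $(a*b)*c=(a*c)*(b*c)$ and bijectivity of $x\mapsto x*b$; $a*^0b=a$, $a*^nb=(a*^{n-1}b)*b$; for a finite quandle the type $t_{\mathbb X}$ is the least $m\ge1$ with $*^m=*^0$. $\Lambda_p=\mathbb Z_p[t,t^{-1}]$; breadth $\mathrm{br}\,f$ = highest minus lowest exponent of nonzero monomials; $f\doteq g$ means $f=at^kg$, $a\in\mathbb Z_p^*$, $k\in\mathbb Z$. $\mathbb F(p,h(t))=\Lambda_p/(h(t))$ (a field with $p^n$ elements), $\bar t$ the class of $t$, and $a*b=\bar ta+(1-\bar t)b$. *)

(* Defs.v *)
From HB Require Import structures.
From mathcomp Require Import all_boot all_order all_algebra.
Set Implicit Arguments. Unset Strict Implicit. Unset Printing Implicit Defensive.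
Import Order.TTheory GRing.Theory Num.Theory.
Local Open Scope ring_scope.

Definition qpow (T : Type) (op : T -> T -> T) (n : nat) (a b : T) : T :=
  iter n (fun x => op x b) a.

Definition qtrivial (T : Type) (op : T -> T -> T) : Prop :=
  forall a b, op a b = a.

Definition qpow_id (T : Type) (op : T -> T -> T) (m : nat) : Prop :=
  forall a b, qpow op m a b = a.

Definition qtype (T : Type) (op : T -> T -> T) (m : nat) : Prop :=
  (1 <= m)%N /\ qpow_id op m /\ (forall k, (1 <= k < m)%N -> ~ qpow_id op k).

Definition alex_op (R : comNzRingType) (tb : R) (a b : R) : R :=
  tb * a + (1 - tb) * b.

(* Lambda_p = Z_p[t, t^-1], realised as the subring of the fraction     *)
(* field Z_p(t) of Laurent polynomials t^k g(t), g in Z_p[t].          *)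

Section Laurent.
Variable F : fieldType.

Notation FR := {fraction {poly F}}.

Definition tF : FR := tofrac ('X : {poly F}).

Definition lp (k : int) (g : {poly F}) : FR := tF ^ k * tofrac g.

Definition inL (x : FR) : Prop := exists (k : int) (g : {poly F}), x = lp k g.

Definition unitL (x : FR) : Prop := inL x /\ x != 0 /\ inL x^-1.

Definition dvdL (x y : FR) : Prop := exists c, inL c /\ y = x * c.

Definition irredL (x : FR) : Prop :=
  [/\ inL x, x != 0, ~ unitL x &
      forall a b, inL a -> inL b -> x = a * b -> unitL a \/ unitL b].

Definition assocL (f g : FR) : Prop :=
  exists (a : F) (k : int), a != 0 /\ f = tofrac (a%:P) * tF ^ k * g.

Definition lowexp (g : {poly F}) : nat := find (fun c => c != 0) g.

Definition breadth (g : {poly F}) : nat := ((size g).-1 - lowexp g)%N.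

Definition strip (g : {poly F}) : {poly F} := g %/ 'X^(lowexp g).
Definition qnorm (g : {poly F}) : {poly F} := (lead_coef (strip g))^-1 *: strip g.

End Laurent.

(* F(p, h) = Lambda_p/(h) for h = t^k g, realised as Z_p[t]/(q) with q the
   monic part of g prime to t (t is a unit of Lambda_p). *)
Definition Fph (p : nat) (g : {poly 'F_p}) : Type := {poly %/ qnorm g}.

Definition tbar (p : nat) (g : {poly 'F_p}) : Fph g := 'qX.

Definition pm (R : nzRingType) (m : nat) : {poly R} := \sum_(j < m) 'X^j.

Definition ring_irreducible (R : comUnitRingType) (x : R) : Prop :=
  [/\ x != 0, x \isn't a GRing.unit &
      forall a b : R, x = a * b -> a \is a GRing.unit \/ b \is a GRing.unit].

(* Main.v *)
Require Import Defs.
From HB Require Import structures.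
From mathcomp Require Import all_boot all_order all_algebra.
From mathcomp Require Import ring.
Import Order.TTheory GRing.Theory Num.Theory.
Local Open Scope ring_scope.

Section PM.
Variable R : idomainType.

Lemma pmS m : pm R m.+1 = pm R m + 'X^m.
Proof. by rewrite /pm big_ord_recr. Qed.

Lemma size_pm m : size (pm R m) = m.
Proof.
elim: m => [|m IH]; first by rewrite /pm big_ord0 size_poly0.
rewrite pmS addrC size_addl size_polyXn // IH //.
Qed.

Lemma pm_monic m : (0 < m)%N -> pm R m \is monic.
Proof.
case: m => // m _; rewrite pmS addrC monicE lead_coefDl ?size_polyXn ?size_pm //.
by rewrite lead_coefXn.
Qed.

Lemma pm_coef0 m : (0 < m)%N -> (pm R m)`_0 = 1.
Proof.
elim: m => // m IH _; rewrite pmS coefD coefXn.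
case: m IH => [|m] IH; first by rewrite /pm big_ord0 coef0 add0r.
by rewrite IH // addr0.
Qed.

Lemma pm_X1 m : 'X^m - 1 = ('X - 1) * pm R m.
Proof. by rewrite subrX1. Qed.

Lemma pm_neq0 m : (0 < m)%N -> pm R m != 0.
Proof. by move=> m0; rewrite -size_poly_gt0 size_pm. Qed.

Lemma pm_mul a b : pm R (a * b) = pm R a * \sum_(i < b) ('X^a) ^+ i.
Proof.
have hX : ('X - 1 : {poly R}) != 0 by rewrite polyXsubC_eq0.
apply: (mulfI hX); rewrite mulrA -!pm_X1 -subrX1 exprM //.
Qed.

End PM.

Lemma pm_irr_prime (R : idomainType) N : (1 < N)%N -> irreducible_poly (pm R N) -> prime N.
Proof.
move=> N1 irr; have pp := pdiv_prime N1.
have dN := pdiv_dvd N.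
case: (eqVneq (pdiv N) N) => [<-//|ne].
exfalso; move: dN => /dvdnP [b Nb].
have hd : pm R (pdiv N) %| pm R N by rewrite {2}Nb mulnC pm_mul dvdp_mulIl.
have s1 : size (pm R (pdiv N)) != 1%N.
  by rewrite size_pm; apply/eqP => e; rewrite e in pp.
have := apply_irredp irr s1 hd.
by rewrite -dvdp_size_eqp // !size_pm (negbTE ne).
Qed.

Lemma map_pm (R S : idomainType) (f : {rmorphism R -> S}) m :
  map_poly f (pm R m) = pm S m.
Proof. by rewrite /pm rmorph_sum; apply: eq_bigr => i _; rewrite rmorphXn /= map_polyX. Qed.

Lemma int_unit_size1 (a : {poly int}) :
  size a = 1%N -> lead_coef a \is a GRing.unit -> a \is a GRing.unit.
Proof.
by move=> sa ul; rewrite poly_unitE sa eqxx /=; rewrite lead_coefE sa in ul.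
Qed.

Lemma pm_int_irr (F : idomainType) (f : {rmorphism int -> F}) N :
  (1 < N)%N -> irreducible_poly (pm F N) -> ring_irreducible (pm int N).
Proof.
move=> N1 irr; split.
- by rewrite pm_neq0 // ltnW.
- by rewrite poly_unitE size_pm gtn_eqF.
move=> a b eab.
have lab : lead_coef a * lead_coef b = 1.
  by rewrite -lead_coefM -eab; apply/eqP; have := @pm_monic int _ (ltnW N1); rewrite monicE.
have ua : lead_coef a \is a GRing.unit by apply/unitrP; exists (lead_coef b); split; [rewrite mulrC|]; exact: lab.
have ub : lead_coef b \is a GRing.unit by apply/unitrP; exists (lead_coef a); split; [|rewrite mulrC]; exact: lab.
have fa : f (lead_coef a) != 0.
  by apply/negP => /eqP h; have := rmorph_unit f ua; rewrite h unitr0.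
have fb : f (lead_coef b) != 0.
  by apply/negP => /eqP h; have := rmorph_unit f ub; rewrite h unitr0.
have sa := size_map_poly_id0 fa; have sb := size_map_poly_id0 fb.
have e : pm F N = map_poly f a * map_poly f b by rewrite -(@map_pm _ _ f N) eab rmorphM.
have a0 : map_poly f a != 0 by rewrite -size_poly_gt0 sa size_poly_gt0; apply: contraNneq fa => ->; rewrite lead_coef0 rmorph0.
have b0 : map_poly f b != 0 by rewrite -size_poly_gt0 sb size_poly_gt0; apply: contraNneq fb => ->; rewrite lead_coef0 rmorph0.
case: (eqVneq (size (map_poly f a)) 1%N) => [s1|s1].
  by left; apply: int_unit_size1 => //; rewrite -sa.
have := apply_irredp irr s1; rewrite e dvdp_mulr // -dvdp_size_eqp ?dvdp_mulr //.
rewrite size_mul // => /(_ isT) /eqP hs.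
right; apply: int_unit_size1 => //; rewrite -sb.
have : (0 < size (map_poly f b))%N by rewrite size_poly_gt0.
move: hs; case: (size (map_poly f b)) => // k.
rewrite addnS /= => /eqP; rewrite -{1}(addn0 (size _)) eqn_add2l.
by case: k.
Qed.

Section Laur.
Variable F : fieldType.
Implicit Types (A B P s : {poly F}).

Lemma tF_neq0 : tF F != 0.
Proof. by rewrite /tF tofrac_eq0 polyX_eq0. Qed.

Lemma tF_nat (m : nat) : tF F ^ (m : int) = tofrac ('X^m : {poly F}).
Proof. by rewrite /tF tofracXn. Qed.

Lemma lp_mul a b A B : lp a A * lp b B = lp (a + b) (A * B).
Proof.
rewrite /lp (expfzDr _ _ tF_neq0) tofracM.
by rewrite -!mulrA; congr (_ * _); rewrite mulrCA.
Qed.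

Lemma lp0 A : lp 0 A = tofrac A.
Proof. by rewrite /lp expr0z mul1r. Qed.

Lemma lpX k A (m : nat) : lp k (A * 'X^m) = lp (k + m) A.
Proof.
by rewrite /lp tofracM -tF_nat (expfzDr _ _ tF_neq0) -mulrA [tofrac A * _]mulrC mulrA.
Qed.

Lemma lp_eq0 e A B : lp e A = tofrac B ->
  exists m : nat, B = 'X^m * A \/ A = 'X^m * B.
Proof.
rewrite /lp; case: e => m /=.
  by rewrite tF_nat -tofracM => /eqP; rewrite tofrac_eq => /eqP <-; exists m; left.
move=> H; exists m.+1; right.
have x0 : tF F ^+ m.+1 != 0 by rewrite expf_neq0 // tF_neq0.
apply/eqP; rewrite -tofrac_eq tofracM tofracXn -/(tF F) -H mulrA.
have -> : tF F ^ Negz m = (tF F ^+ m.+1)^-1 by [].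
by rewrite mulfV // mul1r.
Qed.

Lemma lp_eq e1 e2 A B : lp e1 A = lp e2 B ->
  exists m : nat, B = 'X^m * A \/ A = 'X^m * B.
Proof.
move=> H; apply: (@lp_eq0 (e1 - e2)).
rewrite -lp0 -[B]mulr1 -(@addrN _ e2) -lp_mul -H lp_mul mulr1 //.
Qed.

Lemma coprimeXn A m : A`_0 != 0 -> coprimep A ('X^m).
Proof.
by move=> h; apply: coprimep_expr; rewrite coprimepX /root horner_coef0.
Qed.

Lemma unitL_size e A : unitL (lp e A) -> A`_0 != 0 -> size A == 1%N.
Proof.
move=> [_ [x0 [e2 [B hB]]]] a0.
have : lp e A * lp e2 B = lp 0 1 by rewrite -hB mulfV // lp0 tofrac1.
rewrite lp_mul => /lp_eq [m [h|h]].
  by rewrite -dvdp1 h mulrCA dvdp_mulIl.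
by rewrite -dvdp1 -(Gauss_dvdpr _ (coprimeXn _ m a0)) -h dvdp_mulIl.
Qed.

Lemma dvdL_iff K s P : s`_0 != 0 ->
  (dvdL (lp K s) (tofrac P) <-> s %| P).
Proof.
move=> s0; split.
  move=> [c [[e [C ->]] H]]; move: H; rewrite lp_mul -lp0 => /esym /lp_eq [m [h|h]].
    by rewrite h mulrCA dvdp_mulIl.
  by rewrite -(Gauss_dvdpr _ (coprimeXn _ m s0)) -h dvdp_mulIl.
move=> /dvdpP [R ->]; exists (lp (-K) R); split; first by exists (-K), R.
by rewrite lp_mul addrN lp0 mulrC.
Qed.

Lemma assocL_iff K s P : s`_0 != 0 -> P`_0 != 0 ->
  (assocL (lp K s) (tofrac P) <-> s %= P).
Proof.
move=> s0 P0; split.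
  move=> [a [k' [a0 H]]].
  have : lp K s = lp k' (a *: P).
    by rewrite H /lp -mul_polyC tofracM; rewrite mulrCA mulrA.
  move=> /lp_eq [m [h|h]].
    case: m h => [|m] h; first by rewrite expr0 mul1r in h; rewrite -h eqp_scale.
    have := congr1 (fun p : {poly F} => p`_0) h; rewrite /= coefXnM /= coefZ => /eqP.
    by rewrite mulf_eq0 (negbTE a0) (negbTE P0).
  case: m h => [|m] h; first by rewrite expr0 mul1r in h; rewrite h eqp_scale.
  by move: s0; rewrite h coefXnM /= eqxx.
move=> /eqpf_eq [c c0 hs]; exists c, K; split => //.
by rewrite hs /lp -mul_polyC tofracM mulrCA mulrA.
Qed.

End Laur.

Section Strip.
Variable F : fieldType.

Lemma strip_dec (g : {poly F}) : g != 0 ->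
  [/\ g = strip g * 'X^(lowexp g), (strip g)`_0 != 0 &
      size g = (lowexp g + size (strip g))%N].
Proof.
move=> g0; set j := lowexp g.
have hj : has (fun c => c != 0) g.
  apply/hasP; exists (lead_coef g); last by rewrite lead_coef_eq0.
  by rewrite lead_coefE mem_nth // prednK // size_poly_gt0.
have ej : g = drop_poly j g * 'X^j.
  apply/polyP => i; rewrite coefMXn coef_drop_poly; case: ltnP => hi.
    by have := before_find 0 hi; rewrite /= => /negbFE /eqP.
  by rewrite subnK.
have es : strip g = drop_poly j g by rewrite /strip {1}ej mulpK // monic_neq0 // monicXn.
have d0 : drop_poly j g != 0.
  by apply: contra_neq g0 => h; rewrite ej h mul0r.
split.
- by rewrite es.
- by rewrite es coef_drop_poly add0n; exact: (nth_find 0 hj).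
- by rewrite es {1}ej size_mulXn.
Qed.

End Strip.

Lemma qpowE (R : comNzRingType) (tb : R) m a b :
  qpow (alex_op tb) m a b = tb ^+ m * a + (1 - tb ^+ m) * b.
Proof.
rewrite /qpow; elim: m => [|m IH] /=; first by rewrite expr0 mul1r subrr mul0r addr0.
rewrite IH /alex_op exprS; ring.
Qed.

Lemma qpow_idE (R : comNzRingType) (tb : R) m :
  qpow_id (alex_op tb) m <-> tb ^+ m = 1.
Proof.
split.
  by move=> /(_ 1 0); rewrite qpowE mulr1 mulr0 addr0.
by move=> h a b; rewrite qpowE h subrr mul0r addr0 mul1r.
Qed.

Lemma qtrivialE (R : comNzRingType) (tb : R) :
  qtrivial (alex_op tb) <-> qpow_id (alex_op tb) 1.
Proof. by []. Qed.

Section Q.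
Variable F : fieldType.
Variable q : {poly F}.
Hypothesis qm : q \is monic.
Hypothesis qs : (1 < size q)%N.

Lemma mk_monic_q : mk_monic q = q.
Proof. by rewrite /mk_monic qs qm. Qed.

Lemma in_qpoly_eq0 P : (in_qpoly q P == 0) = (q %| P).
Proof.
rewrite /dvdp (Pdiv.IdomainMonic.modpE qm); apply/eqP/eqP => h.
  by have := congr1 val h; rewrite /= mk_monic_q.
by apply: val_inj => /=; rewrite mk_monic_q.
Qed.

Lemma tpow1 m : ((in_qpoly q 'X) ^+ m == 1) = (q %| 'X^m - 1).
Proof.
by rewrite -subr_eq0 -rmorphXn -(rmorph1 (in_qpoly q)) -rmorphB in_qpoly_eq0.
Qed.

End Q.

Lemma exists_order (F : finFieldType) (q : {poly F}) :
  q \is monic -> (1 < size q)%N -> q`_0 != 0 ->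
  exists m, (0 < m)%N && (q %| 'X^m - 1).
Proof.
move=> qm qs q0.
pose N := (#|F| ^ (size q).-1)%N.
pose f := fun i : 'I_N.+1 => (in_qpoly q 'X) ^+ i.
have : ~~ injectiveb f.
  apply/negP => /injectiveP /leq_card.
  rewrite card_ord (card_monic_qpoly qs qm) -/N.
  by rewrite ltnn.
move=> /injectivePn [x [y xy hxy]].
have key : forall a b : nat, (a < b)%N -> (in_qpoly q 'X) ^+ a = (in_qpoly q 'X) ^+ b ->
   exists m, (0 < m)%N && (q %| 'X^m - 1).
  move=> a b ab hab; exists (b - a)%N; rewrite subn_gt0 ab /=.
  have e : ('X^b - 'X^a : {poly F}) = 'X^a * ('X^(b-a) - 1).
    by rewrite mulrBr mulr1 -exprD subnKC // ltnW.
  rewrite -(Gauss_dvdpr _ (@coprimeXn _ _ a q0)) -e.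
  rewrite -(@in_qpoly_eq0 _ _ qm qs).
  rewrite rmorphB.
  rewrite !rmorphXn.
  by rewrite hab subrr.
case: (ltngtP x y) => h.
- exact: key h hxy.
- exact: key h (esym hxy).
- by move: xy; rewrite (val_inj h) eqxx.
Qed.
From mathcomp Require Import zify.

Theorem lemma2p1 (p : nat) (k : int) (g : {poly 'F_p}) (n : nat) :
  prime p -> odd p ->
  irredL (lp k g) -> breadth g = n -> (1 <= n)%N ->
  let h := lp k g in
  let op := alex_op (tbar g) in
  (* (1) *)
  (qtrivial op <-> assocL h (tofrac ('X - 1))) /\
  (* (2) *)
  (~ qtrivial op -> forall m, (1 <= m)%N -> (qpow_id op m <-> dvdL h (tofrac (pm _ m)))) /\
  (* the type t_X exists, and (3), (4) *)
  (exists T : nat, qtype op T /\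
     (forall m, (1 <= m)%N -> (1 - tbar g ^+ m = 0 <-> (T %| m)%N)) /\
     (~ qtrivial op ->
        (n.+1 <= T)%N /\
        (T = n.+1 <-> irreducible_poly (pm 'F_p n.+1) /\ assocL h (tofrac (pm 'F_p n.+1))) /\
        (T = n.+1 -> ring_irreducible (pm int n.+1) /\ prime n.+1))).
Proof.
move=> pp podd irr hb n1 h op.
case: irr => _ h0 _ hirr.
have g0 : g != 0 by apply: contra_neq h0 => ->; rewrite /lp tofrac0 mulr0.
have [eg s0 sg] := @strip_dec _ g g0.
set s := strip g in eg s0 sg; set j := lowexp g in eg sg.
have sn0 : s != 0 by apply: contra_neq s0 => ->; rewrite coef0.
set c := lead_coef s.
have c0 : c != 0 by rewrite lead_coef_eq0.
set q := qnorm g.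
have hq : q = c^-1 *: s by [].
have qm : q \is monic by rewrite monicE hq lead_coefZ mulVf.
have sizes : size s = n.+1.
  move: hb; rewrite /breadth sg -/j; have : (0 < size s)%N by rewrite size_poly_gt0.
  lia.
have sq : size q = n.+1 by rewrite hq size_scale ?invr_eq0.
have qs : (1 < size q)%N by rewrite sq ltnS.
have q0 : q`_0 != 0 by rewrite hq coefZ mulf_neq0 ?invr_eq0.
have sc : s = c *: q by rewrite hq scalerA mulfV // scale1r.
have esq : forall P, (s %= P) = (q %= P).
  move=> P; apply/idP/idP => e.
    by apply: eqp_trans e; rewrite hq eqp_scale ?invr_eq0.
  by apply: eqp_trans e; rewrite sc eqp_scale.
have hh : h = lp (k + j%:Z) s by rewrite /h eg lpX.
set K := (k + j%:Z) in hh.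
have qirr : irreducible_poly q.
  split => // d d1 dq.
  have := dq; case/dvdpP => e he.
  have : q`_0 = e`_0 * d`_0 by rewrite he coef0M.
  move=> e00; have e0 : e`_0 != 0 by apply: contra_neq q0; rewrite e00 => ->; rewrite mul0r.
  have d0 : d`_0 != 0 by apply: contra_neq q0; rewrite e00 => ->; rewrite mulr0.
  have hd : h = lp K (c *: d) * lp 0 e.
    by rewrite hh lp_mul addr0 -scalerAl mulrC -he -sc.
  case: (hirr _ _ (ex_intro _ K (ex_intro _ (c *: d) erefl)) (ex_intro _ 0 (ex_intro _ e erefl)) hd) => hu.
    by move: (@unitL_size _ _ _ hu); rewrite coefZ mulf_neq0 // size_scale // (negbTE d1) => /(_ isT).
  move: (@unitL_size _ _ _ hu e0) => /eqP se.
  rewrite -dvdp_size_eqp //. rewrite he size_mul ?se //.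
    by apply: contra_neq q0 => e0'; rewrite e00 e0' coef0 mul0r.
  by apply: contra_neq q0 => e0'; rewrite e00 e0' coef0 mulr0.
set tb := tbar g.
have tbm : forall m, (tb ^+ m == 1) = (q %| 'X^m - 1) := @tpow1 _ _ qm qs.
have Xs0 : ('X - 1 : {poly 'F_p})`_0 != 0.
  by rewrite coefB coefX coefC /= sub0r oppr_eq0 oner_eq0.
have triv : qtrivial op <-> q %| 'X - 1.
  rewrite qtrivialE qpow_idE -(expr1 ('X : {poly 'F_p})) -tbm.
  by split => [->|/eqP].
have X10 : ('X - 1 : {poly 'F_p}) != 0 by rewrite polyXsubC_eq0.
have p1 : (q %| 'X - 1) = (q == 'X - 1).
  apply/idP/eqP => [d|->//].
  apply/eqP; rewrite -eqp_monic ?monicXsubC //.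
  rewrite -dvdp_size_eqp // size_XsubC sq eqSS eqn_leq n1 andbT.
  by have := dvdp_leq X10 d; rewrite sq size_XsubC.
have pm0 : forall m, (1 <= m)%N -> (pm 'F_p m)`_0 != 0.
  by move=> m m1; rewrite pm_coef0 // oner_eq0.
have part2 : ~ qtrivial op -> forall m, (q %| 'X^m - 1) = (q %| pm _ m).
  move=> nt m; have cp : coprimep q ('X - 1).
    by rewrite irreducible_poly_coprime //; apply/negP => /triv.
  by rewrite pm_X1 Gauss_dvdpr.
split.
  rewrite triv hh assocL_iff // esq p1; split => [/eqP ->|]; first by rewrite eqpxx.
  by rewrite eqp_monic ?monicXsubC.
split.
  move=> nt m m1; rewrite qpow_idE hh dvdL_iff // -(eqp_dvdl _ (_ : q %= s)).
    by rewrite -part2 // -tbm; split => [->|/eqP].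
  by rewrite -esq eqpxx.
have [m0 hm0] := @exists_order _ _ qm qs q0.
case: (ex_minnP (ex_intro (fun m => (0 < m)%N && (q %| 'X^m - 1)) m0 hm0)) => T /andP [T0 DT] Tmin.
have divT : forall m, (0 < m)%N -> (tb ^+ m == 1) = (T %| m)%N.
  move=> m m0'; apply/idP/idP.
    move=> hm; rewrite /dvdn; case: (eqVneq (m %% T)%N 0%N) => // hne.
    have hr : tb ^+ (m %% T) == 1.
      move: hm; rewrite {1}(divn_eq m T) exprD mulnC exprM.
      by move: DT; rewrite -tbm => /eqP ->; rewrite expr1n mul1r.
    have := Tmin (m %% T)%N; rewrite -tbm hr lt0n hne => /(_ isT).
    by rewrite leqNgt ltn_pmod.
  move=> /dvdnP [c' ->]; rewrite mulnC exprM.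
  by move: DT; rewrite -tbm => /eqP ->; rewrite expr1n.
exists T; split.
  split => //; split; first by rewrite qpow_idE; apply/eqP; rewrite tbm.
  move=> m /andP [m1 mT]; rewrite qpow_idE => /eqP; rewrite tbm => dm.
  by have := Tmin m; rewrite m1 dm => /(_ isT); rewrite leqNgt mT.
split.
  move=> m m1; rewrite -divT //; split => [/eqP|/eqP <-]; last by rewrite subrr.
  by rewrite subr_eq0 eq_sym.
move=> nt.
have qpT : q %| pm _ T by rewrite -part2.
have lb : (n.+1 <= T)%N.
  by have := dvdp_leq (@pm_neq0 _ _ T0) qpT; rewrite sq size_pm.
have iff4 : T = n.+1 <-> irreducible_poly (pm 'F_p n.+1) /\ assocL h (tofrac (pm 'F_p n.+1)).
  split.
    move=> eT; have qe : q = pm _ n.+1.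
      apply/eqP; rewrite -eqp_monic ?pm_monic // -dvdp_size_eqp; last by rewrite -eT.
      by rewrite sq size_pm.
    split; first by rewrite -qe.
    by rewrite hh assocL_iff ?pm0 // esq qe eqpxx.
  move=> [_ ha]; move: ha; rewrite hh assocL_iff ?pm0 // esq => e.
  have d : q %| pm _ n.+1 by rewrite -(eqp_dvdr _ e) dvdpp.
  have : (T %| n.+1)%N by rewrite -divT // tbm part2.
  move=> /(dvdn_leq (ltn0Sn n)) hT; apply/eqP; rewrite eqn_leq hT lb.
  done.
split => //; split => // eT.
have [ir _] := (iff4.1 eT).
split; first by apply: (@pm_int_irr _ (intr : {rmorphism int -> 'F_p}) n.+1) ir; rewrite ltnS.
by apply: (@pm_irr_prime 'F_p n.+1) ir; rewrite ltnS.
Qed.
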